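(* Let $p$ be prime, $\mathbb{F}=\mathbb{F}_p$, $K\ge1$, and let $y_{i,j}\in\mathbb{F}^N$ for $i=1,\dots,p-1$, $j=1,\dots,K$. Let $M=\{x\in\mathbb{F}^N:\ \langle x^i,y_{i,j}\rangle=0\text{ for all }i,j\}$. Let $f:\mathbb{F}^N\to\mathbb{F}$ be constant on $M$. Then $$\|f\|_{U^p}\ge\Big(\frac{|M|}{p^N}\Big)^2.$$
   Context: $x^i$ denotes the vector whose coordinates are the $i$-th powers of the coordinates of $x$, and $\langle u,v\rangle=\sum_{t=1}^Nu(t)v(t)$. For $f:\mathbb{F}^N\to\mathbb{F}$, $f_y(x)=f(x+y)-f(x)$, iterated derivatives $f_{y_1\dots y_k}=(f_{y_1\dots y_{k-1}})_{y_k}$, $e(a)=e^{2\pi ia/p}$, and $\|f\|_{U^k}=\big(\mathbb{E}_{x,y_1,\dots,y_k}e(f_{y_1\dots y_k}(x))\big)^{1/2^k}$. *)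

(* Defs.v *)
From HB Require Import structures.
From mathcomp Require Import all_boot all_order all_algebra all_field.
Set Implicit Arguments. Unset Strict Implicit. Unset Printing Implicit Defensive.
Import Order.TTheory GRing.Theory Num.Theory.
Local Open Scope ring_scope.

Definition vpow (F : nzRingType) (N : nat) (x : 'rV[F]_N) (i : nat) : 'rV[F]_N :=
  \row_t (x 0 t) ^+ i.

Definition dotv (F : nzRingType) (N : nat) (u v : 'rV[F]_N) : F :=
  \sum_(t < N) u 0 t * v 0 t.

Definition dder (F : zmodType) (N : nat) (f : 'rV[F]_N -> F) (y : 'rV[F]_N)
  : 'rV[F]_N -> F := fun x => f (x + y) - f x.

Definition iter_der (F : zmodType) (N : nat) (f : 'rV[F]_N -> F)
  (ys : seq 'rV[F]_N) : 'rV[F]_N -> F := foldl (@dder F N) f ys.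

(* e(a) = exp(2 pi i a / p), in the algebraic complex numbers algC:
   p.-root (-1) is the p-th root of -1 of minimal argument, i.e. exp(i pi/p). *)
Definition ep (p : nat) (a : 'F_p) : algC := ((p.-root (-1)) ^+ 2) ^+ (val a).

(* ||f||_{U^k} = (E_{x,y_1..y_k} e(f_{y_1..y_k}(x)))^{1/2^k};
   the 2^k-th root is algC's principal root (the nonnegative one on
   nonnegative reals). *)
Definition gowers (p N k : nat) (f : 'rV['F_p]_N -> 'F_p) : algC :=
  (2 ^ k)%N.-root
    ((\sum_(x : 'rV['F_p]_N) \sum_(ys : {ffun 'I_k -> 'rV['F_p]_N})
        ep (iter_der f [seq ys i | i <- enum 'I_k] x))
     / (#|'rV['F_p]_N| ^ k.+1)%:R).

(* M = {x : <x^i, y_{i,j}> = 0 for all i = 1..p-1, j = 1..K};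
   index i : 'I_(p.-1) stands for exponent i.+1. *)
Definition Mset (p N K : nat) (y : 'I_p.-1 -> 'I_K -> 'rV['F_p]_N)
  : {set 'rV['F_p]_N} :=
  [set x | [forall i : 'I_p.-1, forall j : 'I_K,
              dotv (vpow x i.+1) (y i j) == 0]].

(* Main.v *)
Require Import Defs.
From HB Require Import structures.
From mathcomp Require Import all_boot all_order all_algebra all_field.
From mathcomp Require Import ring.
Import Order.TTheory GRing.Theory Num.Theory.
Local Open Scope ring_scope.
Set Implicit Arguments. Unset Strict Implicit.

Section EP.
Variable p : nat.
Hypothesis hp : prime p.

Lemma valD (a b : 'F_p) : nat_of_ord (a + b) = ((nat_of_ord a + nat_of_ord b) %% p)%N.
Proof. have := Fp_cast hp. simpl. move=> e. rewrite {3}e //. Qed.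
Lemma val1 : nat_of_ord (1 : 'F_p) = 1%N.
Proof. have := Fp_cast hp. simpl. move=> e. rewrite e modn_small //. exact: prime_gt1. Qed.

Definition zeta : algC := (p.-root (-1)) ^+ 2.
Lemma zetap : zeta ^+ p = 1.
Proof. rewrite /zeta -exprM mulnC exprM rootCK ?prime_gt0 //. by rewrite sqrrN expr1n. Qed.
Lemma zeta_neq1 : zeta != 1.
Proof.
rewrite /zeta; apply/eqP => /eqP; rewrite sqrf_eq1 => /orP[] /eqP h.
  have := rootCK (prime_gt0 hp) (-1 : algC); rewrite h expr1n => /eqP.
  by rewrite -subr_eq0 opprK -(natrD _ 1 1) pnatr_eq0.
have := @rootC_lt0 _ p (-1 : algC) (prime_gt1 hp); rewrite h ltrN10 //.
Qed.
Lemma epE (a : 'F_p) : ep a = zeta ^+ (nat_of_ord a). Proof. by []. Qed.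
Lemma epD (a b : 'F_p) : ep (a + b) = ep a * ep b.
Proof. by rewrite !epE valD expr_mod ?zetap // exprD. Qed.
Lemma ep0 : ep (0 : 'F_p) = 1. Proof. by rewrite epE expr0. Qed.
Lemma ep1 : ep (1 : 'F_p) = zeta. Proof. by rewrite epE val1 expr1. Qed.
Lemma norm_zeta : `|zeta| = 1.
Proof. apply/eqP; rewrite -(@pexpr_eq1 _ _ p) ?prime_gt0 // -normrX zetap normr1 //. Qed.
Lemma norm_ep (a : 'F_p) : `|ep a| = 1. Proof. by rewrite epE normrX norm_zeta expr1n. Qed.
Lemma ep_neq0 (a : 'F_p) : ep a != 0. Proof. by rewrite -normr_eq0 norm_ep oner_eq0. Qed.
Lemma epN (a : 'F_p) : ep (- a) = (ep a)^*.
Proof.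
have h1 : ep (-a) * ep a = 1 by rewrite -epD addNr ep0.
have h2 : (ep a)^* * ep a = 1 by rewrite mulrC -normCK norm_ep expr1n.
by apply: (mulIf (ep_neq0 a)); rewrite h1 h2.
Qed.
Lemma sum_ep : \sum_(c : 'F_p) ep c = 0.
Proof.
have h : \sum_(c : 'F_p) ep c * zeta = \sum_(c : 'F_p) ep c.
  rewrite [in RHS](reindex_inj (addIr (1 : 'F_p))) /=.
  by apply: eq_bigr => c _; rewrite epD ep1.
have : (\sum_(c : 'F_p) ep c) * (zeta - 1) = 0.
  by rewrite mulrBr mulr1 mulr_suml h subrr.
by move/eqP; rewrite mulf_eq0 subr_eq0 (negbTE zeta_neq1) orbF => /eqP.
Qed.
Lemma sum_ep_mul (a : 'F_p) : \sum_(c : 'F_p) ep (c * a) = if a == 0 then p%:R else 0.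
Proof.
case: eqP => [->|/eqP ha].
  by rewrite (eq_bigr (fun _ => 1)) => [|c _]; rewrite ?mulr0 ?ep0 // sumr_const card_Fp.
transitivity (\sum_(c : 'F_p) ep c); last exact: sum_ep. by rewrite [RHS](reindex_inj (mulIf ha)).
Qed.
End EP.


Section Deg.
Variables (F : comNzRingType) (N : nat).
Local Notation V := 'rV[F]_N.

Fixpoint Dg (d : nat) (g : V -> F) : Prop :=
  match d with 0 => forall x x', g x = g x' | d.+1 => forall z, Dg d (dder g z) end.

Lemma Dg_ext d g h : (forall x, g x = h x) -> Dg d g -> Dg d h.
Proof.
elim: d g h => [|d IH] g h e /= Hg; first by move=> x x'; rewrite -!e.
move=> z; apply: (IH (dder g z)) (Hg z) => x; by rewrite /dder !e.
Qed.

Lemma Dg_const d c : Dg d (fun _ => c).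
Proof.
elim: d c => [|d IH] c //= z; apply: Dg_ext (IH 0) => x; by rewrite /dder subrr.
Qed.

Lemma Dg_add d g h : Dg d g -> Dg d h -> Dg d (fun x => g x + h x).
Proof.
elim: d g h => [|d IH] g h /= Hg Hh; first by move=> x x'; rewrite (Hg x x') (Hh x x').
move=> z; apply: Dg_ext (IH _ _ (Hg z) (Hh z)) => x; rewrite /dder; by rewrite addrACA opprD.
Qed.

Lemma Dg_scale d c g : Dg d g -> Dg d (fun x => c * g x).
Proof.
elim: d g => [|d IH] g /= Hg; first by move=> x x'; rewrite (Hg x x').
move=> z; apply: Dg_ext (IH _ (Hg z)) => x; by rewrite /dder mulrBr.
Qed.

Lemma Dg_sum d (I : Type) (r : seq I) (G : I -> V -> F) :
  (forall i, Dg d (G i)) -> Dg d (fun x => \sum_(i <- r) G i x).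
Proof.
move=> HG; elim: r => [|i r IH].
  by apply: Dg_ext (Dg_const d 0) => x; rewrite big_nil.
by apply: Dg_ext (Dg_add (HG i) IH) => x; rewrite big_cons.
Qed.

Lemma Dg_S d g : Dg d g -> Dg d.+1 g.
Proof.
elim: d g => [|d IH] g /= Hg z.
  by move=> x x'; rewrite /dder (Hg (x + z) x) (Hg (x' + z) x') !subrr.
exact: IH.
Qed.

Lemma Dg_le d d' g : (d <= d')%N -> Dg d g -> Dg d' g.
Proof.
move=> /subnK <-; elim: (d' - d)%N => [|k IH] //= Hg; exact: Dg_S (IH Hg).
Qed.

Lemma Dg_mon (t : 'I_N) i : Dg i (fun x : V => (x 0 t) ^+ i).
Proof.
elim: i {-2}i (leqnn i) => [|n IH] i.
  by rewrite leqn0 => /eqP ->; apply: Dg_ext (Dg_const 0 1) => x; rewrite expr0.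
rewrite leq_eqVlt => /orP[/eqP ->|]; last exact: IH.
move=> /= z.
pose G := fun (j : 'I_n.+1) (x : V) => ((z 0 t) ^+ j.+1 *+ 'C(n.+1, j.+1)) * x 0 t ^+ (n - j).
apply: (@Dg_ext _ (fun x => \sum_(j <- index_enum _) G j x)).
  move=> x; rewrite /dder mxE exprDn [in RHS]big_ord_recl /= subn0 expr0 mulr1 bin0 mulr1n addrC addKr.
  apply: eq_bigr => j _; rewrite /G mulrnAl mulrC; congr (_ *+ _).
apply: Dg_sum => j; apply: Dg_scale; apply: Dg_le (IH _ (leq_subr j n)); exact: leq_subr.
Qed.

Lemma iter_der_ext (g h : V -> F) s x : (forall x, g x = h x) -> iter_der g s x = iter_der h s x.
Proof.
elim: s g h x => [|z s IH] g h x e /=; first exact: e.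
by apply: IH => y; rewrite /dder !e.
Qed.

Lemma iter_der_add (g h : V -> F) s x :
  iter_der (fun x => g x + h x) s x = iter_der g s x + iter_der h s x.
Proof.
elim: s g h x => [|z s IH] g h x //=.
rewrite -IH; apply: iter_der_ext => y; by rewrite /dder addrACA opprD.
Qed.

Lemma iter_der_Dg d (g : V -> F) s x : Dg d g -> (d < size s)%N -> iter_der g s x = 0.
Proof.
elim: s d g x => [|z s IH] d g x //= Hg.
case: s IH => [|z' s] IH.
  rewrite ltnS leqn0 => /eqP Hd; move: Hg; rewrite Hd /= => Hg.
  by rewrite /dder (Hg (x + z) x) subrr.
move=> Hd; have Hg' : Dg d.-1.+1 g by case: d Hd Hg => [|d] _ Hg0; [exact: Dg_S | exact: Hg0].
apply: (IH d.-1); first exact: (Hg' z).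
by case: d Hd {Hg Hg'} => [|d] //=; rewrite ltnS.
Qed.
End Deg.


Section Ffun.
Variables (V : finType) (R : nmodType).

Lemma sum_ffunS k (G : seq V -> R) :
  \sum_(ys : {ffun 'I_k.+1 -> V}) G [seq ys i | i <- enum 'I_k.+1] =
  \sum_(ys : {ffun 'I_k -> V}) \sum_(z : V) G (rcons [seq ys i | i <- enum 'I_k] z).
Proof.
rewrite pair_big /=.
pose h := fun (q : {ffun 'I_k -> V} * V) => (
  [ffun i : 'I_k.+1 => if unlift ord_max i is Some j then q.1 j else q.2] : {ffun 'I_k.+1 -> V}).
pose hi := fun (ys : {ffun 'I_k.+1 -> V}) =>
  ([ffun j => ys (lift ord_max j)] : {ffun 'I_k -> V}, ys ord_max).
rewrite (reindex h) /=; last first.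
  exists hi => [[ys z] _|ys _]; rewrite /h /hi /=.
    congr (_, _); last by rewrite ffunE unlift_none.
    by apply/ffunP => j; rewrite !ffunE liftK.
  apply/ffunP => i; rewrite ffunE; case: unliftP => [j ->|->] //=; by rewrite ffunE.
apply: eq_bigr => -[ys z] _; congr G.
rewrite enum_ordSr map_rcons -map_comp /= ffunE unlift_none; congr rcons.
apply: eq_map => j /=; rewrite ffunE.
have -> : widen_ord (leqnSn k) j = lift ord_max j.
  by apply: val_inj; rewrite /= /bump leqNgt ltn_ord.
by rewrite liftK.
Qed.
End Ffun.


Lemma CS_real (I : finType) (a : I -> algC) : (forall i, 0 <= a i) ->
  (\sum_i a i) ^+ 2 <= (\sum_i a i ^+ 2) *+ #|I|.
Proof.
move=> a0.
have key : forall i j, a i * a j *+ 2 <= a i ^+ 2 + a j ^+ 2.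
  move=> i j; have : 0 <= (a i - a j) ^+ 2.
    by rewrite -realEsqr rpredB // ger0_real.
  by rewrite sqrrB addrAC subr_ge0.
rewrite -(ler_pMn2r (n := 2%N)) //.
have -> : (\sum_i a i) ^+ 2 *+ 2 = \sum_i \sum_j a i * a j *+ 2.
  rewrite expr2 mulr_suml -sumrMnl; apply: eq_bigr => i _.
  by rewrite mulr_sumr -sumrMnl.
apply: le_trans (_ : \sum_i \sum_j (a i ^+ 2 + a j ^+ 2) <= _).
  by apply: ler_sum => i _; apply: ler_sum => j _; exact: key.
rewrite (eq_bigr (fun i => a i ^+ 2 *+ #|I| + \sum_j a j ^+ 2)); last first.
  by move=> i _; rewrite big_split /= sumr_const.
by rewrite big_split /= sumr_const -sumrMnl mulr2n.
Qed.


Section Gow.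
Variables (p N : nat).
Hypothesis hp : prime p.
Local Notation V := 'rV['F_p]_N.

Definition Ak k (g : V -> 'F_p) : algC :=
  \sum_(x : V) \sum_(ys : {ffun 'I_k -> V}) ep (iter_der g [seq ys i | i <- enum 'I_k] x).

Lemma sq_sum (h : V -> 'F_p) :
  \sum_(z : V) \sum_(x : V) ep (dder h z x) = `|\sum_(x : V) ep (h x)| ^+ 2.
Proof.
rewrite normCKC exchange_big rmorph_sum mulr_suml /=; apply: eq_bigr => x _.
rewrite mulr_sumr [in RHS](reindex_inj (addrI x)) /=; apply: eq_bigr => z _.
by rewrite /dder epD // epN // mulrC.
Qed.

Lemma A_succ k g : Ak k.+1 g =
  \sum_(ys : {ffun 'I_k -> V}) `|\sum_(x : V) ep (iter_der g [seq ys i | i <- enum 'I_k] x)| ^+ 2.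
Proof.
rewrite /Ak exchange_big /=.
rewrite (sum_ffunS k (fun s => \sum_(x : V) ep (iter_der g s x))).
apply: eq_bigr => ys _; rewrite -sq_sum; apply: eq_bigr => z _.
by apply: eq_bigr => x _; rewrite /iter_der foldl_rcons.
Qed.

Lemma A_bound k g : `|Ak k g| ^+ 2 <= (#|V| ^ k)%:R * Ak k.+1 g.
Proof.
rewrite A_succ /Ak exchange_big /=.
set W := fun ys : {ffun 'I_k -> V} => \sum_(x : V) ep (iter_der g [seq ys i | i <- enum 'I_k] x).
apply: le_trans (_ : (\sum_ys `|W ys|) ^+ 2 <= _).
  by rewrite lerXn2r ?nnegrE ?sumr_ge0 // ler_norm_sum.
apply: le_trans (CS_real _) _ => //.
by rewrite card_ffun card_ord mulr_natl.
Qed.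
End Gow.


Section Chain.
Variables (p N : nat).
Hypothesis hp : prime p.
Local Notation V := 'rV['F_p]_N.
Local Notation n := (#|V|%:R : algC).

Definition Sk k (g : V -> 'F_p) := Ak k g / n ^+ k.+1.

Lemma n_gt0 : 0 < n.
Proof. by rewrite ltr0n card_mx (card_Fp hp) expn_gt0 prime_gt0. Qed.

Lemma S_step k g : `|Sk k g| ^+ 2 <= Sk k.+1 g.
Proof.
have hn := n_gt0; have hn0 : n != 0 by rewrite gt_eqF.
rewrite /Sk normrM normfV normrX normr_nat exprMn exprVn -exprM.
have -> : Ak k.+1 g / n ^+ k.+2 = (n ^+ k * Ak k.+1 g) / n ^+ (k.+1 * 2).
  have -> : (k.+1 * 2 = k + k.+2)%N by rewrite muln2 -addnn !addSn !addnS.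
  rewrite exprD; field.
  by rewrite !expf_neq0.
by rewrite ler_pM2r ?invr_gt0 ?exprn_gt0 // -natrX; exact: A_bound.
Qed.
Lemma S_chain k g : `|Sk 0 g| ^+ (2 ^ k) <= `|Sk k g|.
Proof.
elim: k => [|k IH]; first by rewrite expn0 expr1.
have h := S_step k g; have h0 : 0 <= Sk k.+1 g := le_trans (exprn_ge0 _ (normr_ge0 _)) h.
rewrite (ger0_norm h0); apply: le_trans h.
rewrite expnS mulnC exprM lerXn2r ?nnegrE ?exprn_ge0 //.
Qed.

Lemma S0 g : Sk 0 g = (\sum_(x : V) ep (g x)) / n.
Proof.
rewrite /Sk expr1; congr (_ / _); apply: eq_bigr => x _.
have -> : enum 'I_0 = [::] by apply: size0nil; rewrite size_enum_ord.
by rewrite sumr_const card_ffun card_ord expn0.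
Qed.
End Chain.


Section Four.
Variables (p N K : nat).
Hypothesis hp : prime p.
Variable y : 'I_p.-1 -> 'I_K -> 'rV['F_p]_N.
Local Notation V := 'rV['F_p]_N.
Local Notation I := ('I_p.-1 * 'I_K)%type.

Definition Lf (ij : I) (x : V) : 'F_p := dotv (vpow x ij.1.+1) (y ij.1 ij.2).
Definition phi (c : {ffun I -> 'F_p}) (x : V) : 'F_p := \sum_(ij : I) c ij * Lf ij x.

Lemma L_deg ij : Dg (p.-1) (Lf ij).
Proof.
apply: (@Dg_ext _ _ _ (fun x => \sum_(t <- index_enum 'I_N) (y ij.1 ij.2) 0 t * (x 0 t) ^+ ij.1.+1)).
  by move=> x; rewrite /Lf /dotv; apply: eq_bigr => t _; rewrite mxE mulrC.
apply: Dg_sum => t; apply: Dg_scale; apply: (Dg_le _ (Dg_mon _ t _)).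
exact: ltn_ord.
Qed.

Lemma phi_deg c : Dg p.-1 (phi c).
Proof. by apply: Dg_sum => ij; apply: Dg_scale; apply: L_deg. Qed.

Lemma A_phi f c : Ak p (fun x => f x + phi c x) = Ak p f.
Proof.
apply: eq_bigr => x _; apply: eq_bigr => ys _; congr ep.
rewrite iter_der_add (@iter_der_Dg _ _ p.-1 (phi c)) ?phi_deg ?addr0 //.
  exact: phi_deg.
by rewrite size_map size_enum_ord prednK ?prime_gt0.
Qed.
Lemma fourier x : \sum_(c : {ffun I -> 'F_p}) ep (phi c x) =
  if x \in Mset y then (p ^ #|{: I}|)%:R else 0.
Proof.
rewrite (eq_bigr (fun c : {ffun I -> 'F_p} => \prod_(ij : I) ep (c ij * Lf ij x))); last first.
  by move=> c _; rewrite /phi; apply: (big_morph _ (epD hp) (@ep0 p)).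
rewrite -(bigA_distr_bigA (fun ij a => ep (a * Lf ij x))) /=.
rewrite (eq_bigr (fun ij => if Lf ij x == 0 then p%:R else 0)); last first.
  by move=> ij _; rewrite sum_ep_mul.
case: ifP => hx.
  rewrite (eq_bigr (fun _ => p%:R)); first by rewrite prodr_const natrX.
  move=> [i j] _; move: hx; rewrite inE => /forallP/(_ i)/forallP/(_ j)/eqP.
  by rewrite /Lf /= => ->; rewrite eqxx.
move: hx; rewrite inE => /negbT; rewrite negb_forall => /existsP[i].
rewrite negb_forall => /existsP[j] hij.
by rewrite (bigD1 (i, j)) //= /Lf /= (negbTE hij) mul0r.
Qed.
Lemma zero_in_M : (0 : V) \in Mset y.
Proof.
rewrite inE; apply/forallP => i; apply/forallP => j; rewrite /dotv big1 // => t _.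
by rewrite !mxE expr0n /= mul0r.
Qed.

Lemma exists_c f : (forall x x', x \in Mset y -> x' \in Mset y -> f x = f x') ->
  exists c : {ffun I -> 'F_p}, (#|Mset y|)%:R <= `|\sum_(x : V) ep (f x + phi c x)|.
Proof.
move=> hf.
set P := (p ^ #|{: I}|)%:R : algC.
set T := fun c : {ffun I -> 'F_p} => \sum_(x : V) ep (f x + phi c x).
have hsum : \sum_c T c = P * #|Mset y|%:R * ep (f 0).
  rewrite /T exchange_big /=.
  rewrite (eq_bigr (fun x => ep (f x) * \sum_(c : {ffun I -> 'F_p}) ep (phi c x))); last first.
    by move=> x _; rewrite mulr_sumr; apply: eq_bigr => c _; rewrite epD.
  rewrite (eq_bigr (fun x => if x \in Mset y then P * ep (f 0) else 0)); last first.
    move=> x _; rewrite fourier; case: ifP => hx; last by rewrite mulr0.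
    by rewrite (hf x 0) ?zero_in_M // mulrC.
  by rewrite -big_mkcond /= sumr_const -[LHS]mulr_natr mulrAC.
have hnorm : `|\sum_c T c| = P * #|Mset y|%:R.
  by rewrite hsum normrM (norm_ep hp) mulr1 normrM !normr_nat.
case: (boolP [exists c, #|Mset y|%:R <= `|T c|]) => [/existsP //|/existsPn hn].
have hlt : \sum_(c : {ffun I -> 'F_p}) `|T c| < \sum_(c : {ffun I -> 'F_p}) (#|Mset y|%:R : algC).
  apply: ltr_sum.
    by apply/hasP; exists [ffun=> 0] => //; rewrite mem_index_enum.
  by move=> c _; rewrite real_ltNge ?normr_real ?realn ?hn.
have := le_lt_trans (ler_norm_sum _ _ _) hlt.
rewrite hnorm sumr_const card_ffun (card_Fp hp) -mulr_natr [X in X < _]mulrC lt_neqAle.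
case/andP => /eqP H _; exfalso; apply: H; by rewrite -[RHS]mulr_natr.
Qed.
End Four.

Unset Implicit Arguments.
Theorem proposition2p8 (p N K : nat) (hp : prime p) (hK : (0 < K)%N)
  (y : 'I_p.-1 -> 'I_K -> 'rV['F_p]_N) (f : 'rV['F_p]_N -> 'F_p) :
  (forall x x', x \in Mset y -> x' \in Mset y -> f x = f x') ->
  ((#|Mset y|)%:R / (p ^ N)%:R) ^+ 2 <= gowers p f :> algC.
Proof.
move=> hf.
have [c hc] := exists_c hp hf.
set g := fun x => f x + phi y c x.
have hnV : #|'rV['F_p]_N| = (p ^ N)%N by rewrite card_mx (card_Fp hp) mul1n.
have hpN : (0 : algC) < (p ^ N)%:R by rewrite ltr0n expn_gt0 prime_gt0.
set m := (#|Mset y|)%:R / (p ^ N)%:R : algC.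
have m0 : 0 <= m by rewrite divr_ge0 ?ler0n.
have m1 : m <= 1.
  by rewrite ler_pdivrMr // mul1r ler_nat -hnV max_card.
have hS0 : m <= `|Sk 0 g|.
  rewrite S0 normrM normfV normr_nat hnV ler_pM2r ?invr_gt0 //.
have hp1 : (0 < 2 ^ p)%N by rewrite expn_gt0.
have hSp : m ^+ (2 ^ p) <= Sk p g.
  have h1 := S_chain hp p g.
  have h0 : 0 <= Sk p g.
    have := S_step hp p.-1 g; rewrite (prednK (prime_gt0 hp)).
    exact: le_trans (exprn_ge0 _ (normr_ge0 _)).
  rewrite -(ger0_norm h0); apply: le_trans h1.
  by rewrite lerXn2r ?nnegrE.
have -> : gowers p f = (2 ^ p).-root (Sk p g).
  rewrite /Sk (A_phi hp y f c) /gowers natrX //.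
apply: le_trans (_ : m <= _); first by rewrite expr2 ler_piMr.
rewrite -{1}(exprCK hp1 m0) ler_rootCl // nnegrE exprn_ge0 //.
Qed.
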